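(* Let $1<a<2$, $B>0$, $P\ge 1$, $\delta>0$ and a positive integer $k$ with $(a/2)^{k-1}a \le 1-3\delta$. Let $(Z_n)$ be any real sequence and consider the system $X_{n+1} = aX_n + Z_n - U_n$ run under the following round-based rule starting at a time $m$ which is the start of a round, i.e. $C_m>0$ and $|X_m|\le C_m$: $U_m=0$; $C_{m+1}=aC_m+B$; $C_{m+i} = \frac a2 C_{m+i-1}+B$ for $i=2,\ldots,k$; $U_{m+i} = \frac a2 C_{m+i}\operatorname{sign}(X_{m+i})$ for $i=1,\ldots,k-1$; then $C_{m+k+j}=P^jC_{m+k}$ and $U_{m+k+j}=0$ for $j\ge 0$, up to $\tau \triangleq \inf\{j\ge0\colon |X_{m+k+j}|\le C_{m+k+j}\}$ (the round ends at time $m+k+\tau$). Then for every integer $j$ with $0\le j\le\tau$, $$\max\{|X_{m+1}|,\ldots,|X_{m+k+j}|,C_{m+k+j}\} \le P a^{k+j}\left(2C_m + \frac{aB}{(2-a)(a-1)} + \sum_{\ell=0}^{k+j-1}a^{-\ell-1}|Z_{m+\ell}|\right).$$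
   Context: $\operatorname{sign}(x)\in\{-1,0,1\}$ denotes the sign of $x$. The quantities $C_n$ are the bounds on the state magnitude maintained by a 1-bit quantizer-controller scheme: during the first $k$ steps of a round the quantizer sends signs of the state and at time $m+k+j$ it sends whether $|X_{m+k+j}|\le C_{m+k+j}$ (magnitude test). *)

(* Defs.v *)
From Stdlib Require Export Reals.
Open Scope R_scope.

Definition sign (x : R) : R :=
  match total_order_T x 0 with
  | inleft (left _) => -1
  | inleft (right _) => 0
  | inright _ => 1
  end.

(* Main.v *)
Require Import Defs.
From Stdlib Require Import Reals Lra Lia Arith.
Open Scope R_scope.

Fixpoint Mseq (a K : R) (z : nat -> R) (n : nat) : R :=
  match n with
  | O => K
  | S n => a * Mseq a K z n + z n
  end.

Lemma Mseq_closed (a K : R) (z : nat -> R) (ha : 0 < a) : forall n,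
  Mseq a K z (S n) = a ^ (S n) * (K + sum_f_R0 (fun l => / a ^ (l + 1) * z l) n).
Proof.
  induction n.
  - simpl. field. lra.
  - change (Mseq a K z (S (S n))) with (a * Mseq a K z (S n) + z (S n)).
    rewrite IHn. change (sum_f_R0 (fun l => / a ^ (l + 1) * z l) (S n)) with
      (sum_f_R0 (fun l => / a ^ (l + 1) * z l) n + / a ^ (S n + 1) * z (S n)).
    replace (S n + 1)%nat with (S (S n)) by lia.
    assert (a ^ n <> 0) by (apply pow_nonzero; lra).
    simpl. field. repeat split; try lra; auto.
Qed.

Lemma Mseq_ge (a K : R) (z : nat -> R) (ha : 1 < a) (hK : 0 <= K)
  (hz : forall n, 0 <= z n) : forall n, K <= Mseq a K z n.
Proof.
  induction n; simpl. lra.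
  specialize (hz n). nra.
Qed.

Lemma Mseq_mono (a K : R) (z : nat -> R) (ha : 1 < a) (hK : 0 <= K)
  (hz : forall n, 0 <= z n) : forall n p, (n <= p)%nat -> Mseq a K z n <= Mseq a K z p.
Proof.
  intros n p Hnp. induction Hnp. lra.
  simpl. pose proof (Mseq_ge a K z ha hK hz m). specialize (hz m). nra.
Qed.

Theorem lemma2 (a B P delta : R) (k : nat) (X Z U C : nat -> R) (m : nat)
  (ha1 : 1 < a) (ha2 : a < 2) (hB : 0 < B) (hP : 1 <= P) (hdelta : 0 < delta)
  (hk : (1 <= k)%nat)
  (hak : (a / 2) ^ (k - 1) * a <= 1 - 3 * delta)
  (hsys : forall n : nat, X (S n) = a * X n + Z n - U n)
  (hCm : 0 < C m) (hXm : Rabs (X m) <= C m)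
  (hUm : U m = 0)
  (hC1 : C (m + 1)%nat = a * C m + B)
  (hCi : forall i : nat, (2 <= i <= k)%nat ->
           C (m + i)%nat = a / 2 * C (m + i - 1)%nat + B)
  (hUi : forall i : nat, (1 <= i <= k - 1)%nat ->
           U (m + i)%nat = a / 2 * C (m + i)%nat * sign (X (m + i)%nat))
  (htail : forall j : nat,
           (forall j' : nat, (j' < j)%nat ->
              C (m + k + j')%nat < Rabs (X (m + k + j')%nat)) ->
           C (m + k + j)%nat = P ^ j * C (m + k)%nat /\ U (m + k + j)%nat = 0) :
  forall j : nat,
    (* j <= tau, where tau = inf {j >= 0 | |X_{m+k+j}| <= C_{m+k+j}} *)
    (forall j' : nat, (j' < j)%nat ->
       C (m + k + j')%nat < Rabs (X (m + k + j')%nat)) ->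
    let bound :=
      P * a ^ (k + j) *
        (2 * C m + a * B / ((2 - a) * (a - 1)) +
         sum_f_R0 (fun l => / a ^ (l + 1) * Rabs (Z (m + l)%nat)) (k + j - 1)) in
    (forall i : nat, (1 <= i <= k + j)%nat -> Rabs (X (m + i)%nat) <= bound) /\
    C (m + k + j)%nat <= bound.
Proof.
  intros j Hj bound.
  set (D := a * B / ((2 - a) * (a - 1))).
  set (K := 2 * C m + D).
  set (z := fun l => Rabs (Z (m + l)%nat)).
  set (M := Mseq a K z).
  assert (HD : 0 < D /\ B <= a / 2 * D).
  { split. unfold D. apply Rdiv_lt_0_compat. nra. nra.
    assert (E : a / 2 * D - B = B * (3 * (a-1)^2 + 1) / (2 * (2 - a) * (a - 1))).
    { unfold D. field. lra. }
    assert (0 <= B * (3 * (a-1)^2 + 1) / (2 * (2 - a) * (a - 1))).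
    { apply Rlt_le, Rdiv_lt_0_compat. apply Rmult_lt_0_compat; [lra|]. pose proof (pow2_ge_0 (a-1)). lra. assert (0 < (2-a)*(a-1)) by nra. nra. }
    lra. }
  destruct HD as [HD0 HD1].
  assert (hz : forall n, 0 <= z n) by (intro; apply Rabs_pos).
  assert (HK : 0 <= K) by (unfold K; lra).
  assert (Mge : forall n, K <= M n) by (apply Mseq_ge; auto).
  assert (Mmono : forall n p, (n <= p)%nat -> M n <= M p) by (apply Mseq_mono; auto).
  assert (MS : forall n, M (S n) = a * M n + z n) by reflexivity.
  assert (Hstep : forall n, X (m + S n)%nat = a * X (m + n)%nat + Z (m + n)%nat - U (m + n)%nat).
  { intro n. replace (m + S n)%nat with (S (m + n)) by lia. apply hsys. }
  assert (L1 : forall i, (i <= k)%nat ->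
            0 <= C (m + i)%nat <= M i /\ Rabs (X (m + i)%nat) <= M i).
  { induction i as [|i IH]; intro Hi.
    - replace (m + 0)%nat with m by lia. unfold M; simpl. unfold K. lra.
    - destruct IH as [[Hc0 Hc1] Hx]. lia.
      pose proof (Mge i) as Mi. pose proof (hz i) as zi.
      rewrite MS. destruct i as [|i].
      + replace (m + 0)%nat with m in * by lia. replace (m + 1)%nat with (m + 1)%nat by lia.
        rewrite hC1, Hstep. replace (m + 0)%nat with m by lia. rewrite hUm.
        simpl in Mi. unfold K in Mi.
        split. split. nra. simpl. unfold K. nra.
        replace (a * X m + Z m - 0) with (a * X m + Z m) by ring.
        eapply Rle_trans. apply Rabs_triang. rewrite Rabs_mult, (Rabs_right a) by lra.
        unfold z. replace (m + 0)%nat with m by lia. simpl. unfold K. nra.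
      + rewrite hCi by lia. replace (m + S (S i) - 1)%nat with (m + S i)%nat by lia.
        assert (D <= M (S i)) by (unfold K in Mi; lra). split. split. nra. nra.
        rewrite Hstep, hUi by lia.
        replace (a * X (m + S i)%nat + Z (m + S i)%nat -
                 a / 2 * C (m + S i)%nat * sign (X (m + S i)%nat))
          with (a * (X (m + S i)%nat - C (m + S i)%nat / 2 * sign (X (m + S i)%nat))
                + Z (m + S i)%nat) by field.
        eapply Rle_trans. apply Rabs_triang. rewrite Rabs_mult, (Rabs_right a) by lra.
        assert (Rabs (X (m + S i)%nat - C (m + S i)%nat / 2 * sign (X (m + S i)%nat)) <= M (S i)).
        { revert Hx. unfold sign. destruct (total_order_T (X (m + S i)%nat) 0) as [[h|h]|h];
          unfold Rabs; repeat destruct Rcase_abs; intros; lra. }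
        unfold z. nra. }
  assert (L2 : forall n, (n <= k + j)%nat -> Rabs (X (m + n)%nat) <= M n).
  { induction n as [|n IH]; intro Hn.
    - apply L1; lia.
    - destruct (le_lt_dec (S n) k) as [h|h]. apply L1; lia.
      rewrite Hstep, MS.
      destruct (htail (n - k)%nat) as [_ HU].
      { intros j' Hj'. apply Hj. lia. }
      replace (m + k + (n - k))%nat with (m + n)%nat in HU by lia.
      rewrite HU. replace (a * X (m + n)%nat + Z (m + n)%nat - 0)
        with (a * X (m + n)%nat + Z (m + n)%nat) by ring.
      eapply Rle_trans. apply Rabs_triang. rewrite Rabs_mult, (Rabs_right a) by lra.
      specialize (IH ltac:(lia)). unfold z. nra. }
  assert (HC : C (m + k + j)%nat <= P * M (k + j)%nat).
  { destruct j as [|j0].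
    - replace (m + k + 0)%nat with (m + k)%nat by lia.
      destruct (L1 k ltac:(lia)) as [[_ h] _]. pose proof (Mge k).
      replace (k + 0)%nat with k by lia. nra.
    - destruct (htail (S j0) Hj) as [h1 _].
      destruct (htail j0) as [h2 _]. { intros j' Hj'. apply Hj. lia. }
      assert (E : C (m + k + S j0)%nat = P * C (m + k + j0)%nat).
      { rewrite h1, h2. simpl. ring. }
      rewrite E. pose proof (Hj j0 ltac:(lia)) as h3.
      pose proof (L2 (k + j0)%nat ltac:(lia)) as h4.
      replace (m + (k + j0))%nat with (m + k + j0)%nat in h4 by lia.
      pose proof (Mmono (k + j0)%nat (k + S j0)%nat ltac:(lia)).
      pose proof (Rabs_pos (X (m + k + j0)%nat)). nra. }
  assert (Hb : bound = P * M (k + j)%nat).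
  { unfold bound. set (n := (k + j - 1)%nat).
    replace (k + j)%nat with (S n) by (unfold n; lia).
    unfold M. rewrite Mseq_closed by lra. unfold K, D, z. ring. }
  rewrite Hb. split; [|exact HC].
  intros i Hi. eapply Rle_trans. apply L2. lia.
  pose proof (Mmono i (k + j)%nat ltac:(lia)). pose proof (Mge i). nra.
Qed.
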